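(* Let $\mathcal{P}$ be a partition of $\{1,\dots,n\}$ and $\mathcal{U}$ a subspace of $\mathbb{R}^n$. The following are equivalent: (1) $\mathcal{U}$ is recoverable by BMTFA; (2) $\mathcal{U}$ is $\mathcal{P}$-realizable; (3) $\mathcal{U}^\perp$ has the $\mathcal{P}$-ellipsoid fitting property.
   Context: A matrix is $\mathcal{P}$-block-diagonal if it is zero outside the principal submatrices indexed by the blocks $\mathcal{I}\in\mathcal{P}$. Block minimum trace factor analysis (BMTFA) with input symmetric $X$: minimize $\operatorname{tr}(L)$ subject to $X=B+L$, $L$ positive semidefinite, $B$ $\mathcal{P}$-block-diagonal. $\mathcal{U}$ is recoverable by BMTFA if for every $\mathcal{P}$-block-diagonal $B^\star$ and every positive semidefinite $L^\star$ with column space $\mathcal{U}$, $(B^\star,L^\star)$ is the unique optimum of BMTFA with input $B^\star+L^\star$. The $\mathcal{P}$-elliptope is $\mathcal{E}_{\mathcal{P}}=\{Y\succeq 0: Y_{\mathcal{I}}=I \text{ for all }\mathcal{I}\in\mathcal{P}\}$, where $Y_{\mathcal{I}}$ is the principal submatrix indexed by $\mathcal{I}$. $\mathcal{U}$ is $\mathcal{P}$-realizable if some $Y\in\mathcal{E}_{\mathcal{P}}$ has nullspace containing $\mathcal{U}$. For $\mathcal{I}\subseteq\{1,\dots,n\}$, $S^{\mathcal{I}}=\{x\in\mathbb{R}^n:\|x\|_2=1,\ x_j=0\text{ for }j\notin\mathcal{I}\}$. A centered ellipsoid in $\mathbb{R}^k$ is given by a positive semidefinite $M$, with boundary $\{y: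 y^TMy=1\}$. A subspace $\mathcal{V}$ has the $\mathcal{P}$-ellipsoid fitting property if there is a $k\times n$ matrix $V$ with row space $\mathcal{V}$ and a centered ellipsoid in $\mathbb{R}^k$ whose boundary contains $\bigcup_{\mathcal{I}\in\mathcal{P}}V(S^{\mathcal{I}})$. *)

(* Defs.v *)
From HB Require Import structures.
From mathcomp Require Import all_boot all_order all_algebra.
From mathcomp Require Import reals.
Set Implicit Arguments. Unset Strict Implicit. Unset Printing Implicit Defensive.
Import Order.TTheory GRing.Theory Num.Theory.
Local Open Scope ring_scope.

Section Defs.
Variable R : realType.

Definition psd (k : nat) (A : 'M[R]_k) : Prop :=
  A^T = A /\ forall x : 'cV[R]_k, 0 <= (x^T *m A *m x) 0 0.

Variable n : nat.
(* P : a partition of {0,...,n-1}, given as a set of blocks *)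
Variable P : {set {set 'I_n}}.

Definition blockdiag (B : 'M[R]_n) : Prop :=
  forall i j : 'I_n, (forall I, I \in P -> ~~ ((i \in I) && (j \in I))) -> B i j = 0.

Definition bmtfa_feasible (X B L : 'M[R]_n) : Prop :=
  X = B + L /\ psd L /\ blockdiag B.

Definition bmtfa_unique_opt (X B L : 'M[R]_n) : Prop :=
  bmtfa_feasible X B L /\
  forall B' L', bmtfa_feasible X B' L' ->
    \tr L <= \tr L' /\ (\tr L' = \tr L -> B' = B /\ L' = L).

(* Subspaces of R^n are represented as row spaces of matrices U : 'M_n.
   U is recoverable by BMTFA; column space of L is the row space of L^T. *)
Definition recoverable (U : 'M[R]_n) : Prop :=
  forall Bs Ls : 'M[R]_n, blockdiag Bs -> Bs^T = Bs -> psd Ls -> (Ls^T == U)%MS ->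
    bmtfa_unique_opt (Bs + Ls) Bs Ls.

Definition elliptope (Y : 'M[R]_n) : Prop :=
  psd Y /\ forall I, I \in P -> forall i j, i \in I -> j \in I ->
    Y i j = (i == j)%:R.

Definition realizable (U : 'M[R]_n) : Prop :=
  exists Y, elliptope Y /\ forall u : 'rV[R]_n, (u <= U)%MS -> Y *m u^T = 0.

Definition orthmx (U : 'M[R]_n) : 'M[R]_n := kermx U^T.

Definition sphere_on (I : {set 'I_n}) (x : 'cV[R]_n) : Prop :=
  \sum_i (x i 0) ^+ 2 = 1 /\ forall j, j \notin I -> x j 0 = 0.

Definition ellipsoid_fitting (V : 'M[R]_n) : Prop :=
  exists (k : nat) (W : 'M[R]_(k, n)) (M : 'M[R]_k),
    (W == V)%MS /\ psd M /\
    forall I, I \in P -> forall x, sphere_on I x ->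
      ((W *m x)^T *m M *m (W *m x)) 0 0 = 1.

End Defs.

(* Main.v *)
Require Import Defs.
From HB Require Import structures.
From mathcomp Require Import all_boot all_order all_algebra.
From mathcomp Require Import reals.
From mathcomp Require Import ring lra.
Set Implicit Arguments. Unset Strict Implicit. Unset Printing Implicit Defensive.
Import Order.TTheory GRing.Theory Num.Theory.
Local Open Scope ring_scope.

Section S1. Variable R : realType.
Implicit Types (k : nat).
Definition bf k (A : 'M[R]_k) (x y : 'cV[R]_k) : R := (x^T *m A *m y) 0 0.
Lemma bf_sum k (A : 'M[R]_k) x y :
  bf A x y = \sum_i \sum_j x i 0 * A i j * y j 0.
Proof.
rewrite /bf mxE; under eq_bigr => j _ do rewrite mxE big_distrl /=.
rewrite exchange_big /=; apply: eq_bigr => i _; apply: eq_bigr => j _.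
by rewrite mxE.
Qed.
Lemma bf_delta k (A : 'M[R]_k) i j :
  bf A (delta_mx i 0) (delta_mx j 0) = A i j.
Proof.
rewrite bf_sum (bigD1 i) //=.
rewrite [X in _ + X]big1; last first.
  by move=> l hl; apply: big1 => m _; rewrite !mxE (negbTE hl) !mul0r.
rewrite addr0 (bigD1 j) //= [X in _ + X]big1; last first.
  by move=> l hl; rewrite !mxE (negbTE hl) mulr0.
by rewrite !mxE !eqxx mul1r mulr1 addr0.
Qed.
Lemma bfDl k (A : 'M[R]_k) x y z : bf A (x + y) z = bf A x z + bf A y z.
Proof.
rewrite !bf_sum -big_split; apply: eq_bigr => i _; rewrite -big_split.
by apply: eq_bigr => j _; rewrite mxE !mulrDl.
Qed.
Lemma bfDr k (A : 'M[R]_k) x y z : bf A z (x + y) = bf A z x + bf A z y.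
Proof.
rewrite !bf_sum -big_split; apply: eq_bigr => i _; rewrite -big_split.
by apply: eq_bigr => j _; rewrite mxE !mulrDr.
Qed.
Lemma bfZl k (A : 'M[R]_k) a x y : bf A (a *: x) y = a * bf A x y.
Proof.
rewrite !bf_sum mulr_sumr; apply: eq_bigr => i _; rewrite mulr_sumr.
by apply: eq_bigr => j _; rewrite mxE !mulrA.
Qed.
Lemma bfZr k (A : 'M[R]_k) a x y : bf A x (a *: y) = a * bf A x y.
Proof.
rewrite !bf_sum mulr_sumr; apply: eq_bigr => i _; rewrite mulr_sumr.
by apply: eq_bigr => j _; rewrite mxE; ring.
Qed.
Lemma bfNl k (A : 'M[R]_k) x y : bf A (- x) y = - bf A x y.
Proof. by rewrite -scaleN1r bfZl mulN1r. Qed.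
Lemma bfNr k (A : 'M[R]_k) x y : bf A x (- y) = - bf A x y.
Proof. by rewrite -scaleN1r bfZr mulN1r. Qed.
Lemma bf_sym k (A : 'M[R]_k) x y : A^T = A -> bf A x y = bf A y x.
Proof.
move=> hA; rewrite !bf_sum exchange_big; apply: eq_bigr => i _.
apply: eq_bigr => j _; rewrite -{1}hA mxE; ring.
Qed.
Lemma bfAdd k (A B : 'M[R]_k) x y : bf (A + B) x y = bf A x y + bf B x y.
Proof. by rewrite /bf mulmxDr mulmxDl mxE. Qed.
Lemma bfOpp k (A : 'M[R]_k) x y : bf (- A) x y = - bf A x y.
Proof. by rewrite /bf mulmxN mulNmx mxE. Qed.
Lemma mx11_mul (a b : 'M[R]_1) : (a *m b) 0 0 = a 0 0 * b 0 0.
Proof. by rewrite mxE big_ord1. Qed.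
Lemma bf_outer k (v w x y : 'cV[R]_k) :
  bf (v *m w^T) x y = (x^T *m v) 0 0 * (w^T *m y) 0 0.
Proof. by rewrite /bf !mulmxA -mx11_mul !mulmxA. Qed.
Lemma tr11 (a : 'M[R]_1) : a^T 0 0 = a 0 0.
Proof. by rewrite mxE. Qed.
Lemma dot_sym k (x y : 'cV[R]_k) : (x^T *m y) 0 0 = (y^T *m x) 0 0.
Proof. by rewrite -tr11 trmx_mul trmxK. Qed.

Lemma trD k l (A B : 'M[R]_(k, l)) : (A + B)^T = A^T + B^T.
Proof. by apply/matrixP => i j; rewrite !mxE. Qed.
Lemma trB k l (A B : 'M[R]_(k, l)) : (A - B)^T = A^T - B^T.
Proof. by apply/matrixP => i j; rewrite !mxE. Qed.
Lemma trZ k l a (A : 'M[R]_(k, l)) : (a *: A)^T = a *: A^T.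
Proof. by apply/matrixP => i j; rewrite !mxE. Qed.

Definition psdb k (A : 'M[R]_k) := A^T = A /\ forall x, 0 <= bf A x x.
Lemma psdE k (A : 'M[R]_k) : psd A <-> psdb A.
Proof. by []. Qed.

Lemma lin_ge0 (c d : R) : (forall t, 0 <= t * c + d) -> c = 0.
Proof.
move=> h; apply/eqP/negPn/negP => hc.
have := h (- (`|d| + 1) / c); rewrite mulrAC -mulrA divff // mulr1.
have := ler_norm d; lra.
Qed.

Lemma psd_diag_ge0 k (A : 'M[R]_k) i : psd A -> 0 <= A i i.
Proof. by case=> _ h; rewrite -bf_delta; apply: h. Qed.

Lemma psd_diag0 k (A : 'M[R]_k) i j : psd A -> A j j = 0 -> A i j = 0.
Proof.
move=> [hs h] hjj.
suff : 2 * A i j = 0 by lra.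
apply: (@lin_ge0 _ (A i i)) => t.
have : 0 <= bf A (t *: delta_mx j 0 + delta_mx i 0) (t *: delta_mx j 0 + delta_mx i 0) by exact: h.
have hji : A j i = A i j by rewrite -{1}hs mxE.
rewrite !bfDl !bfDr !bfZl !bfZr !bf_delta hjj hji.
lra.
Qed.

Lemma psd_diag0_all k (A : 'M[R]_k) : psd A -> (forall j, A j j = 0) -> A = 0.
Proof.
move=> hA h; apply/matrixP => i j; rewrite mxE; exact: psd_diag0 (h j).
Qed.
End S1.

Section S2. Variable R : realType.

Lemma bf_col k (A : 'M[R]_k) i x : (x^T *m col i A) 0 0 = bf A x (delta_mx i 0).
Proof. by rewrite colE /bf mulmxA. Qed.

Lemma mxBE k l (A B : 'M[R]_(k, l)) i j : (A - B) i j = A i j - B i j.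
Proof. by rewrite !mxE. Qed.

Lemma chol_step k (A : 'M[R]_k) i : psd A -> 0 < A i i ->
  let v := (Num.sqrt (A i i))^-1 *: col i A in
  psd (A - v *m v^T) /\ (A - v *m v^T) i i = 0 /\
  (forall j, A j j = 0 -> (A - v *m v^T) j j = 0).
Proof.
move=> [hs h] ha v.
set a := A i i.
have sa : Num.sqrt a ^+ 2 = a by rewrite sqr_sqrtr // ltW.
have sa0 : Num.sqrt a != 0 by rewrite sqrtr_eq0 -ltNge.
have hv j : v j 0 = (Num.sqrt a)^-1 * A j i by rewrite !mxE.
have vv j l : (v *m v^T) j l = v j 0 * v l 0.
  by rewrite mxE big_ord1 [v^T _ _]mxE.
have hinv : (Num.sqrt a)^-1 * (Num.sqrt a)^-1 = a^-1.
  by rewrite -invfM -expr2 sa.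
have hAij j : A j i = A i j by rewrite -{1}hs mxE.
split; last split.
- split.
    by rewrite linearB /= hs trmx_mul trmxK.
  move=> x.
  have -> : (x^T *m (A - v *m v^T) *m x) 0 0 = bf A x x - bf (v *m v^T) x x.
    by rewrite -bfOpp -bfAdd.
  have hxv : (x^T *m v) 0 0 = (Num.sqrt a)^-1 * bf A x (delta_mx i 0).
    by rewrite /v -scalemxAr mxE bf_col.
  rewrite bf_outer [(v^T *m x) 0 0]dot_sym hxv.
  set p := bf A x (delta_mx i 0).
  have : 0 <= bf A (x - (p / a) *: delta_mx i 0) (x - (p / a) *: delta_mx i 0).
    exact: h.
  rewrite !bfDl !bfDr !bfNl !bfNr !bfZl !bfZr bf_delta.
  rewrite (bf_sym (delta_mx i 0) x hs) -/p -/a.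
  have e : (Num.sqrt a)^-1 * p * ((Num.sqrt a)^-1 * p) = p ^+ 2 / a.
    by rewrite mulrACA hinv expr2 mulrC.
  rewrite e.
  have ea : p / a * (p / a * a) = p ^+ 2 / a.
    by rewrite divfK ?gt_eqF // mulrAC expr2.
  rewrite ea.
  have ea2 : p / a * p = p ^+ 2 / a by rewrite mulrAC expr2.
  rewrite ea2; lra.
- rewrite mxBE vv hv mulrACA hinv -/a mulrC -mulrA divff ?gt_eqF // mulr1.
  by rewrite subrr.
- move=> j hj; rewrite mxBE vv hv hAij (psd_diag0 i (conj hs h) hj) hj.
  by rewrite mulr0 mul0r subr0.
Qed.

Lemma chol_aux k (m : nat) (A : 'M[R]_k) : psd A ->
  (#|[set j | A j j != 0%R]| <= m)%N ->
  exists S : 'M[R]_k, A = S^T *m S /\ forall j, A j j = 0 -> row j S = 0.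
Proof.
elim: m A => [|m IH] A hA hc.
  exists 0; split; last by move=> j _; apply/rowP => l; rewrite !mxE.
  rewrite mulmx0; apply: psd_diag0_all => // j.
  move: hc; rewrite leqn0 cards_eq0 => /eqP e0.
  by have := in_set0 j; rewrite -e0 inE => /negbFE/eqP.
have [e0 | [i]] := set_0Vmem [set j | A j j != 0].
  exists 0; split; last by move=> j _; apply/rowP => l; rewrite !mxE.
  rewrite mulmx0; apply: psd_diag0_all => // j.
  by have := in_set0 j; rewrite -e0 inE => /negbFE/eqP.
rewrite inE => hi.
have ha : 0 < A i i by rewrite lt_def hi psd_diag_ge0.
have [hA' [hii hjj]] := chol_step hA ha.
set v := (Num.sqrt (A i i))^-1 *: col i A in hA' hii hjj.
have [|S [hS hrow]] := IH (A - v *m v^T) hA'.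
  have hsub : [set j | (A - v *m v^T) j j != 0] \subset [set j | A j j != 0] :\ i.
    apply/subsetP => j; rewrite !inE => hj; apply/andP; split.
      by apply: contraNneq hj => ->; rewrite hii.
    by apply: contraNN hj => /eqP h0; apply/eqP; exact: hjj.
  rewrite -ltnS; apply: leq_ltn_trans (subset_leq_card hsub) _.
  rewrite (cardsD1 i) inE hi /= add1n ltnS in hc.
  by rewrite ltnS hc.
exists (S + delta_mx i 0 *m v^T); split.
  have hr : delta_mx (0 : 'I_1) i *m S = 0 by move: (hrow i hii); rewrite rowE.
  have hr' : S^T *m delta_mx i (0 : 'I_1) = 0 by rewrite -trmx_delta -trmx_mul hr trmx0.
  rewrite trD trmx_mul trmxK trmx_delta mulmxDl !mulmxDr -hS.
  rewrite !mulmxA hr' mul0mx addr0 -[_ *m _ *m S]mulmxA hr mulmx0 add0r.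
  rewrite -(mulmxA v) mul_delta_mx.
  have -> : (delta_mx 0 0 : 'M[R]_1) = 1%:M.
    by apply/matrixP => a b; rewrite !ord1 !mxE.
  by rewrite mulmx1 subrK.
move=> j hj; rewrite linearD /= hrow; last exact: hjj.
have hji : j != i by apply/eqP => eji; move: ha; rewrite -eji hj ltxx.
rewrite add0r row_mul; apply/rowP => l.
rewrite mxE big_ord1 !mxE (negbTE hji) /=.
by rewrite mul0r.
Qed.

Lemma chol k (A : 'M[R]_k) : psd A -> exists S : 'M[R]_k, A = S^T *m S.
Proof.
move=> hA; have [S [hS _]] := chol_aux hA (leqnn _).
by exists S.
Qed.

Lemma psd_gram k m (S : 'M[R]_(m, k)) : psd (S^T *m S).
Proof.
split; first by rewrite trmx_mul trmxK.
move=> x; rewrite mulmxA -trmx_mul -mulmxA mxE.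
by apply: sumr_ge0 => j _; rewrite mxE -expr2 sqr_ge0.
Qed.
End S2.

Section S3. Variable R : realType.

Definition frob k (A B : 'M[R]_k) : R := \sum_i \sum_j A i j * B i j.

Lemma frob_sym k (A B : 'M[R]_k) : frob A B = frob B A.
Proof. by apply: eq_bigr => i _; apply: eq_bigr => j _; rewrite mulrC. Qed.

Lemma frob_tr k (A B : 'M[R]_k) : frob A B = \tr (A *m B^T).
Proof.
rewrite /mxtrace; apply: eq_bigr => i _; rewrite mxE.
by apply: eq_bigr => j _; rewrite mxE.
Qed.

Lemma tr_mmT a b (M : 'M[R]_(a, b)) :
  \tr (M *m M^T) = \sum_i \sum_j M i j ^+ 2.
Proof.
rewrite /mxtrace; apply: eq_bigr => i _; rewrite mxE.
by apply: eq_bigr => j _; rewrite mxE expr2.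
Qed.

Lemma sumsq0 a b (M : 'M[R]_(a, b)) : \sum_i \sum_j M i j ^+ 2 = 0 -> M = 0.
Proof.
move=> h; apply/matrixP => i j; rewrite mxE.
have h1 := psumr_eq0P (fun i _ => sumr_ge0 _ (fun j _ => sqr_ge0 (M i j))) h.
have := psumr_eq0P (fun j _ => sqr_ge0 (M i j)) (h1 i isT) (i := j) isT.
by move/eqP; rewrite sqrf_eq0 => /eqP.
Qed.

Lemma sumsq_ge0 a b (M : 'M[R]_(a, b)) : 0 <= \sum_i \sum_j M i j ^+ 2.
Proof. by apply: sumr_ge0 => i _; apply: sumr_ge0 => j _; apply: sqr_ge0. Qed.

Lemma frob_psd k (A B : 'M[R]_k) : psd A -> psd B ->
  0 <= frob A B /\ (frob A B = 0 -> A *m B = 0).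
Proof.
move=> hA hB; have [S hS] := chol hA; have [T hT] := chol hB.
have e : frob A B = \sum_i \sum_j (S *m T^T) i j ^+ 2.
  rewrite frob_tr hB.1 hS hT -tr_mmT trmx_mul trmxK.
  by rewrite -!mulmxA mxtrace_mulC !mulmxA.
rewrite e; split; first exact: sumsq_ge0.
move/sumsq0 => h0; rewrite hS hT -mulmxA (mulmxA S) h0 mul0mx mulmx0.
by [].
Qed.

Lemma frob_outer k (G : 'M[R]_k) x : frob G (x *m x^T) = bf G x x.
Proof.
rewrite bf_sum; apply: eq_bigr => i _; apply: eq_bigr => j _.
by rewrite mxE big_ord1 mxE; ring.
Qed.

Lemma sumsq_bf k (x : 'cV[R]_k) : \sum_i x i 0 ^+ 2 = bf 1%:M x x.
Proof.
by rewrite /bf mulmx1 mxE; apply: eq_bigr => i _; rewrite mxE expr2.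
Qed.

Lemma null_sub m n (Y : 'M[R]_(m, n)) (U : 'M[R]_n) :
  (forall u : 'rV[R]_n, (u <= U)%MS -> Y *m u^T = 0) <-> Y *m U^T = 0.
Proof.
split=> [h | h u hu].
  apply/matrixP => a b.
  transitivity ((Y *m (row b U)^T) a 0).
    by rewrite !mxE; apply: eq_bigr => l _; rewrite !mxE.
  by rewrite h ?row_sub // !mxE.
by rewrite -(mulmxKpV hu) trmx_mul mulmxA h mul0mx.
Qed.

Lemma sub_null m p n (Y : 'M[R]_(m, n)) (U : 'M[R]_n) (A : 'M[R]_(p, n)) :
  (A <= U)%MS -> Y *m U^T = 0 -> Y *m A^T = 0.
Proof. by move=> hA h; rewrite -(mulmxKpV hA) trmx_mul mulmxA h mul0mx. Qed.

Definition blockI n (Y : 'M[R]_n) (I : {set 'I_n}) :=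
  forall i j, i \in I -> j \in I -> Y i j = (i == j)%:R.

Lemma sphere_bf n (Y : 'M[R]_n) I x : blockI Y I -> sphere_on I x ->
  bf Y x x = 1.
Proof.
move=> hY [hs hsup]; rewrite -hs sumsq_bf !bf_sum.
apply: eq_bigr => i _; apply: eq_bigr => j _.
case hi: (i \in I); last by rewrite hsup ?hi // !mul0r.
case hj: (j \in I); last by rewrite (hsup j) ?hj // !mulr0.
by rewrite hY // mxE.
Qed.

Lemma quadW k n (W : 'M[R]_(k, n)) (M : 'M[R]_k) x :
  ((W *m x)^T *m M *m (W *m x)) 0 0 = bf (W^T *m M *m W) x x.
Proof. by rewrite /bf trmx_mul !mulmxA. Qed.

Lemma delta_sphere n (I : {set 'I_n}) i : i \in I -> sphere_on I (delta_mx i 0 : 'cV[R]_n).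
Proof.
move=> hi; split.
  rewrite sumsq_bf bf_delta mxE eqxx //.
by move=> j hj; rewrite mxE; case: eqP => // e; move: hj; rewrite e hi.
Qed.
End S3.

Section S4. Variable R : realType.

Lemma real_ell n (P : {set {set 'I_n}}) (U : 'M[R]_n) :
  realizable P U -> ellipsoid_fitting P (orthmx U).
Proof.
move=> [Y [[hYp hblk] hnull]].
have [S hS] := chol hYp.
have hYU : Y *m U^T = 0 by apply/null_sub.
have hSU : S *m U^T = 0.
  apply: sumsq0; rewrite -tr_mmT mxtrace_mulC trmx_mul trmxK.
  by rewrite !mulmxA -(mulmxA _ S^T) -hS -mulmxA hYU mulmx0 mxtrace0.
have hSW : (S <= orthmx U)%MS by rewrite /orthmx sub_kermx hSU.
set W := orthmx U; set C := S *m pinvmx W.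
have hCW : C *m W = S by rewrite /C mulmxKpV.
exists n, W, (C^T *m C); split.
  by apply/andP; split; apply: submx_refl.
split; first exact: psd_gram.
move=> I hI x hx; rewrite quadW.
have -> : W^T *m (C^T *m C) *m W = Y by rewrite mulmxA -trmx_mul -mulmxA hCW hS.
by apply: (sphere_bf _ hx) => i j hi hj; exact: (hblk I hI i j hi hj).
Qed.

Lemma ell_real n (P : {set {set 'I_n}}) (U : 'M[R]_n) :
  ellipsoid_fitting P (orthmx U) -> realizable P U.
Proof.
move=> [k [W [M [hW [[hMs hMp] hfit]]]]].
set Y := W^T *m M *m W.
have hYs : Y^T = Y by rewrite /Y !trmx_mul trmxK hMs mulmxA.
have hYp : psd Y.
  split=> // x; have := hMp (W *m x); rewrite quadW //.
have hq I x : I \in P -> sphere_on I x -> bf Y x x = 1.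
  by move=> hI hx; rewrite -quadW; apply: hfit hI x hx.
exists Y; split; last first.
  move=> u hu; move/andP: hW => [hWV _].
  have hWU : W *m U^T = 0 by apply/eqP; rewrite -sub_kermx.
  by rewrite /Y -mulmxA (proj2 (null_sub W U) hWU u hu) mulmx0.
split=> // I hI i j hi hj.
have hii l : l \in I -> Y l l = 1.
  by move=> hl; rewrite -(bf_delta Y l l); exact: (hq I _ hI (@delta_sphere R _ _ _ hl)).
case: (eqVneq i j) => [<-|hij]; first by rewrite hii.
have -> : (false%:R : R) = 0 by [].
set c := (Num.sqrt (2 : R))^-1.
have c2 : c * c = 2^-1.
  by rewrite /c -invfM -expr2 sqr_sqrtr // ler0n.
have hji : Y j i = Y i j by rewrite -{1}hYs mxE.
have hx : sphere_on I (c *: (delta_mx i 0 + delta_mx j 0)).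
  split; last first.
    move=> l hl; rewrite !mxE.
    have -> : (l == i) = false by apply/negbTE; apply: contraNneq hl => ->.
    have -> : (l == j) = false by apply/negbTE; apply: contraNneq hl => ->.
    by rewrite /= addr0 mulr0.
  rewrite sumsq_bf !bfZl !bfZr !bfDl !bfDr !bf_delta !mxE eqxx (negbTE hij).
  rewrite eq_sym (negbTE hij) !eqxx /= mulrA c2; by field.
have := hq I _ hI hx.
rewrite !bfZl !bfZr !bfDl !bfDr !bf_delta hii // hii // hji mulrA c2.
move=> h; have h2 : (2:R) * (2^-1 * (1 + Y i j + (Y i j + 1))) = 2 by rewrite h mulr1.
rewrite mulrA divff ?pnatr_eq0 // mul1r in h2; lra.
Qed.
End S4.

Section S5. Variable R : realType.

Lemma sum_delta_l k (F : 'I_k -> R) i : \sum_j (i == j)%:R * F j = F i.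
Proof.
rewrite (bigD1 i) //= eqxx mul1r big1 ?addr0 // => j hj.
by rewrite eq_sym (negbTE hj) mul0r.
Qed.

Lemma blk_cases n (P : {set {set 'I_n}}) (i j : 'I_n) :
  (exists2 I, I \in P & (i \in I) && (j \in I)) \/
  (forall I, I \in P -> ~~ ((i \in I) && (j \in I))).
Proof.
case: (boolP [exists I in P, (i \in I) && (j \in I)]).
  by case/existsP => I /andP [hI h]; left; exists I.
rewrite negb_exists => /forallP h; right => I hI.
by move: (h I); rewrite hI.
Qed.

Lemma frob_blockdiag n (P : {set {set 'I_n}}) (Y D : 'M[R]_n) :
  (forall I, I \in P -> blockI Y I) -> blockdiag P D -> frob Y D = \tr D.
Proof.
move=> hY hD; rewrite /frob /mxtrace; apply: eq_bigr => i _.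
rewrite -(sum_delta_l (fun j => D i j) i); apply: eq_bigr => j _.
case: (blk_cases P i j) => [[I hI /andP [hi hj]] | h].
  by rewrite (hY I hI i j hi hj).
by rewrite hD // !mulr0.
Qed.

Lemma blockdiag_null n (P : {set {set 'I_n}}) (Y D : 'M[R]_n) :
  partition P [set: 'I_n] ->
  (forall I, I \in P -> blockI Y I) -> blockdiag P D -> Y *m D = 0 -> D = 0.
Proof.
move=> hP hY hD h0; have htriv : trivIset P by case/and3P: hP.
apply/matrixP => i j; rewrite mxE.
case: (blk_cases P i j) => [[I hI /andP [hi hj]] | h]; last exact: hD.
have := congr1 (fun M : 'M[R]_n => M i j) h0; rewrite !mxE => <-.
rewrite -(sum_delta_l (fun k => D k j) i); apply: eq_bigr => k _ /=.
case hk: (k \in I); first by rewrite (hY I hI i k hi hk).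
rewrite hD ?mulr0 // => J hJ; apply/negP => /andP [hkJ hjJ].
have e1 := def_pblock htriv hI hj; have e2 := def_pblock htriv hJ hjJ.
by move: hk; rewrite -e1 e2 hkJ.
Qed.

Lemma frobDr k (A B C : 'M[R]_k) : frob A (B + C) = frob A B + frob A C.
Proof.
rewrite /frob -big_split; apply: eq_bigr => i _; rewrite -big_split.
by apply: eq_bigr => j _; rewrite mxE mulrDr.
Qed.

Lemma real_rec n (P : {set {set 'I_n}}) (U : 'M[R]_n) :
  partition P [set: 'I_n] -> realizable P U -> recoverable P U.
Proof.
move=> hP [Y [[hYp hblk] hnull]] Bs Ls hBs hBsT hLs hLU.
have hY : forall I, I \in P -> blockI Y I by move=> I hI i j; apply: hblk.
have hYU : Y *m U^T = 0 by apply/null_sub.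
have hYLs : Y *m Ls = 0.
  by move/andP: hLU => [hLU _]; rewrite -[Ls]trmxK; apply: sub_null hLU hYU.
have fYLs : frob Y Ls = 0 by rewrite frob_tr hLs.1 hYLs mxtrace0.
split; first by split=> //; split.
move=> B' L' [hX [hL' hB']].
set D := L' - Ls.
have hD1 : L' = Ls + D by rewrite /D addrC subrK.
have hD2 : D = Bs - B'.
  by apply/eqP; rewrite /D subr_eq addrAC hX addrAC subrr add0r.
have hDb : blockdiag P D.
  by move=> i j h; rewrite hD2 mxBE hBs // hB' // subr0.
have hfD : frob Y D = \tr D := frob_blockdiag hY hDb.
have htr : \tr L' = \tr Ls + \tr D by rewrite hD1 mxtraceD.
have [hf0 hfz] := frob_psd hYp hL'.
have hfL : frob Y L' = \tr D by rewrite hD1 frobDr fYLs add0r.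
split; first by rewrite htr lerDl -hfL.
move=> heq.
have htD : \tr D = 0 by move: htr; rewrite heq => /eqP; rewrite addrC -subr_eq subrr => /eqP <-.
have hYL' : Y *m L' = 0 by apply: hfz; rewrite hfL.
have hYD : Y *m D = 0 by rewrite /D mulmxBr hYL' hYLs subrr.
have hD0 := blockdiag_null hP hY hDb hYD.
split.
  by apply/eqP; rewrite eq_sym -subr_eq0 -hD2 hD0.
by rewrite hD1 hD0 addr0.
Qed.
End S5.


From mathcomp Require Import boolp classical_sets topology normedtype matrix_normedtype derive.
Import Order.TTheory GRing.Theory Num.Theory.
Import numFieldNormedType.Exports.
Local Open Scope ring_scope.

Section SA. Variable R : realType.

Lemma ctnD m (f g : 'rV[R]_m -> R) : continuous f -> continuous g ->
  continuous (fun v => f v + g v).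
Proof. by move=> hf hg x; apply: (cvgD (hf x) (hg x)). Qed.

Lemma ctnM m (f g : 'rV[R]_m -> R) : continuous f -> continuous g ->
  continuous (fun v => f v * g v).
Proof. by move=> hf hg x; apply: (cvgM (hf x) (hg x)). Qed.

Lemma ctn_sum m (I : Type) (r : seq I) (Pr : pred I) (F : I -> 'rV[R]_m -> R) :
  (forall i, continuous (F i)) ->
  continuous (fun v => \sum_(i <- r | Pr i) F i v).
Proof.
move=> h; elim: r => [|a r IH].
  have -> : (fun v => \sum_(i <- [::] | Pr i) F i v) = (fun=> 0).
    by apply: funext => v; rewrite big_nil.
  exact: cst_continuous.
have -> : (fun v => \sum_(i <- a :: r | Pr i) F i v) =
  (fun v => (if Pr a then F a v else 0) + \sum_(i <- r | Pr i) F i v).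
  apply: funext => v; rewrite big_cons; case: (Pr a) => //.
  by rewrite add0r.
apply: ctnD => //; case: (Pr a) => //; exact: cst_continuous.
Qed.

Lemma sq_le_sumsq a b (M : 'M[R]_(a, b)) i j :
  M i j ^+ 2 <= \sum_i \sum_j M i j ^+ 2.
Proof.
rewrite (bigD1 i) //= (bigD1 j) //=.
have h1 : 0 <= \sum_(j0 | j0 != j) M i j0 ^+ 2 by apply: sumr_ge0 => *; apply: sqr_ge0.
have h2 : 0 <= \sum_(i0 | i0 != i) \sum_j0 M i0 j0 ^+ 2.
  by apply: sumr_ge0 => *; apply: sumr_ge0 => *; apply: sqr_ge0.
lra.
Qed.

Lemma min_psd n (F : 'M[R]_n -> R) (c : R) : 1 <= c ->
  continuous (fun v : 'rV[R]_(n * n) => F ((vec_mx v)^T *m vec_mx v)) ->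
  exists Y0, psd Y0 /\ forall Y, psd Y -> \tr Y <= c -> F Y0 <= F Y.
Proof.
move=> hc hF.
pose A := [set v : 'rV[R]_(n * n) | forall i, `[-c, c]%classic (v ord0 i)]%classic.
have cA : compact A.
  apply: (@rV_compact _ _ (fun=> `[-c, c]%classic)).
  by move=> _; apply: segment_compact.
have A0 : (A !=set0)%classic.
  by exists 0 => i /=; rewrite mxE in_itv /=; apply/andP; split; lra.
have [v0 _ hmin] := compact_EVT_min A0 cA (continuous_subspaceT hF).
exists ((vec_mx v0)^T *m vec_mx v0); split; first exact: psd_gram.
move=> Y hY htr; have [S hS] := chol hY.
have hin : mxvec S \in A.
  apply: mem_set => l; case/mxvec_indexP: l => a b; rewrite mxvecE /= in_itv /=.
  have h1 := sq_le_sumsq S a b.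
  have h2 : \tr Y = \sum_i \sum_j S i j ^+ 2 by rewrite hS mxtrace_mulC tr_mmT.
  have h3 : S a b ^+ 2 <= c by rewrite -h2 in h1; exact: le_trans h1 htr.
  apply/andP; split; nra.
by have := hmin _ hin; rewrite mxvecK -hS.
Qed.
End SA.

Section S6. Variable R : realType.

Lemma gram_eq n (U : 'M[R]_n) : ((U^T *m U)^T == U)%MS.
Proof.
rewrite trmx_mul trmxK.
have hs : (U^T *m U <= U)%MS by apply: submxMl.
apply/andP; split => //.
have [_] := mxrank_leqif_sup hs; move=> <-.
have h := mxrank_mul_ker U^T U; rewrite mxrank_tr in h.
suff h0 : \rank (U^T :&: kermx U)%MS = 0%N by rewrite h0 addn0 in h; rewrite h.
set C := (U^T :&: kermx U)%MS.
have hC1 : (C <= U^T)%MS by apply: capmxSl.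
have hC2 : C *m U = 0 by apply/eqP; rewrite -sub_kermx capmxSr.
have hCC : C *m C^T = 0.
  by rewrite -(mulmxKpV hC1) trmx_mul trmxK mulmxA (mulmxKpV hC1) hC2 mul0mx.
have : C = 0 by apply: sumsq0; rewrite -tr_mmT hCC mxtrace0.
by move=> ->; rewrite mxrank0.
Qed.

Lemma psd0 n : psd (0 : 'M[R]_n).
Proof. by split; [rewrite trmx0 | move=> x; rewrite mulmx0 mul0mx mxE]. Qed.

Lemma psd_add n (A B : 'M[R]_n) : psd A -> psd B -> psd (A + B).
Proof.
move=> [ha hA] [hb hB]; split; first by rewrite trD ha hb.
move=> x; have h1 := hA x; have h2 := hB x.
rewrite mulmxDr mulmxDl mxE; lra.
Qed.

Lemma psd_scale n (A : 'M[R]_n) a : 0 <= a -> psd A -> psd (a *: A).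
Proof.
move=> ha [hs hA]; split; first by rewrite trZ hs.
move=> x; rewrite -scalemxAr -scalemxAl mxE.
by apply: mulr_ge0 => //; apply: hA.
Qed.

Lemma fo_lemma (a q s0 : R) : 0 < s0 -> 0 <= q ->
  (forall s, 0 < s -> s <= s0 -> 0 <= 2 * s * a + s ^+ 2 * q) -> 0 <= a.
Proof.
move=> hs0 hq h; rewrite leNgt; apply/negP => ha.
have key s : 0 < s -> s * q < - a -> 2 * s * a + s ^+ 2 * q < 0.
  move=> hs hsq; have : s * (s * q) < s * (- a) by rewrite ltr_pM2l.
  rewrite expr2; nra.
pose t := - a / (q + 1).
have ht : 0 < t by rewrite /t divr_gt0 //; lra.
have htq : t * q < - a.
  have e : t * (q + 1) = - a by rewrite /t divfK // gt_eqF //; lra.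
  nra.
case: (leP s0 t) => hst.
  have := h s0 hs0 (lexx _); have := key s0 hs0.
  have : s0 * q <= t * q by rewrite ler_wpM2r.
  lra.
have := h t ht (ltW hst); have := key t ht htq; lra.
Qed.

Definition blkR n (P : {set {set 'I_n}}) (i j : 'I_n) : R :=
  ([exists I in P, (i \in I) && (j \in I)])%:R.

Lemma blkR01 n (P : {set {set 'I_n}}) i j : blkR P i j = 0 \/ blkR P i j = 1.
Proof. by rewrite /blkR; case: [exists _ in _, _]; [right|left]. Qed.

Lemma blkR_in n (P : {set {set 'I_n}}) I i j : I \in P -> i \in I -> j \in I ->
  blkR P i j = 1.
Proof.
move=> hI hi hj; rewrite /blkR; have -> // : [exists I in P, (i \in I) && (j \in I)].
by apply/existsP; exists I; rewrite hI hi hj.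
Qed.

Lemma blkR_out n (P : {set {set 'I_n}}) i j :
  (forall I, I \in P -> ~~ ((i \in I) && (j \in I))) -> blkR P i j = 0.
Proof.
move=> h; rewrite /blkR; have -> // : [exists I in P, (i \in I) && (j \in I)] = false.
by apply/existsP => -[I /andP [hI hij]]; move: (h I hI); rewrite hij.
Qed.

Lemma blkR_sym n (P : {set {set 'I_n}}) i j : blkR P j i = blkR P i j.
Proof.
case: (blk_cases P i j) => [[I hI /andP [hi hj]] | h].
  by rewrite (blkR_in hI hi hj) (blkR_in hI hj hi).
rewrite !blkR_out // => I hI; move: (h I hI); apply: contra.
by rewrite andbC.
Qed.

Lemma blkR_diag n (P : {set {set 'I_n}}) i : finset.partition P [set: 'I_n] ->
  blkR P i i = 1.
Proof.
move=> hP; have hc : finset.cover P = [set: 'I_n] by case/and3P: hP => /eqP.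
have hi : i \in finset.cover P by rewrite hc inE.
by apply: (blkR_in (I := finset.pblock P i)); rewrite ?finset.pblock_mem ?finset.mem_pblock.
Qed.

End S6.

Section S7. Variable R : realType.

Lemma mxtraceB' k (A B : 'M[R]_k) : \tr (A - B) = \tr A - \tr B.
Proof. by rewrite /mxtrace -sumrB; apply: eq_bigr => i _; rewrite !mxE. Qed.

Lemma sum2_lin k (F1 F2 F3 : 'I_k -> 'I_k -> R) :
  \sum_i \sum_j (F1 i j + F2 i j - F3 i j) =
  \sum_i \sum_j F1 i j + \sum_i \sum_j F2 i j - \sum_i \sum_j F3 i j.
Proof.
rewrite -big_split -sumrB /=; apply: eq_bigr => i _.
by rewrite -big_split -sumrB.
Qed.

Lemma term_le_sum2 k (F : 'I_k -> 'I_k -> R) a b :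
  (forall i j, 0 <= F i j) -> F a b <= \sum_i \sum_j F i j.
Proof.
move=> h; rewrite (bigD1 a) //= (bigD1 b) //=.
have h1 : 0 <= \sum_(j0 | j0 != b) F a j0 by apply: sumr_ge0 => *.
have h2 : 0 <= \sum_(i0 | i0 != a) \sum_j0 F i0 j0.
  by apply: sumr_ge0 => *; apply: sumr_ge0 => *.
lra.
Qed.

Lemma frobNr k (A B : 'M[R]_k) : frob A (- B) = - frob A B.
Proof.
rewrite /frob -sumrN; apply: eq_bigr => i _; rewrite -sumrN.
by apply: eq_bigr => j _; rewrite mxE mulrN.
Qed.

Lemma tr_psd_ge0 k (A : 'M[R]_k) : psd A -> 0 <= \tr A.
Proof. by move=> hA; apply: sumr_ge0 => i _; apply: psd_diag_ge0. Qed.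

Lemma rec_real n (P : {set {set 'I_n}}) (U : 'M[R]_n) :
  finset.partition P [set: 'I_n] -> recoverable P U -> realizable P U.
Proof.
move=> hP hrec.
set L := U^T *m U.
have hLp : psd L := psd_gram U.
have hLs : L^T = L := hLp.1.
have hLU : (L^T == U)%MS := gram_eq U.
have hopt D G : blockdiag P D -> psd G -> L = D + G -> \tr L <= \tr G.
  move=> hD hG e.
  have h0 : blockdiag P (0 : 'M[R]_n) by move=> i j _; rewrite mxE.
  have [_ h] := hrec 0 L h0 (trmx0 _ _ _) hLp hLU.
  by apply: (h D G _).1; split; [rewrite add0r | split].
pose b := @blkR R n P.
pose phi (Y : 'M[R]_n) := \sum_i \sum_j (b i j * ((Y i j - (i == j)%:R) *
  (Y i j - (i == j)%:R)) + 2 * (L i j * Y i j)).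
have hcont : continuous (fun v : 'rV[R]_(n * n) => phi ((vec_mx v)^T *m vec_mx v)).
  have cY i j : continuous (fun v : 'rV[R]_(n * n) => ((vec_mx v)^T *m vec_mx v) i j).
    have -> : (fun v : 'rV[R]_(n * n) => ((vec_mx v)^T *m vec_mx v) i j) =
        (fun v => \sum_k v 0 (mxvec_index k i) * v 0 (mxvec_index k j)).
      by apply: funext => v; rewrite mxE; apply: eq_bigr => k _; rewrite !mxE.
    apply: ctn_sum => k; apply: ctnM; exact: coord_continuous.
  apply: ctn_sum => i; apply: ctn_sum => j.
  apply: ctnD; apply: ctnM; try exact: cst_continuous.
    by apply: ctnM; apply: ctnD; try exact: cst_continuous; exact: cY.
  apply: ctnM; [exact: cst_continuous | exact: cY].

have hc : (1 : R) <= (n * n.+1).+1%:R by rewrite ler1n.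
have [Y0 [hY0 hmin]] := min_psd hc hcont.
have hY0s i j : Y0 j i = Y0 i j by rewrite -{1}hY0.1 mxE.
have hb01 i j : b i j = 0 \/ b i j = 1 by apply: blkR01.
have hbs i j : b j i = b i j by apply: blkR_sym.
have hbd i : b i i = 1 by apply: blkR_diag.
pose D := \matrix_(i, j) (b i j * ((i == j)%:R - Y0 i j)).
pose G := L - D.
pose Q (W : 'M[R]_n) := \sum_i \sum_j b i j * (W i j * W i j).
have hexp W s : phi (Y0 + s *: W) = phi Y0 + 2 * s * frob G W + s ^+ 2 * Q W.
  rewrite /phi /frob /Q !mulr_sumr -!big_split /=; apply: eq_bigr => i _.
  rewrite !mulr_sumr -!big_split /=; apply: eq_bigr => j _.
  rewrite /G /D !mxE; ring.
have hQ W : 0 <= Q W.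
  apply: sumr_ge0 => i _; apply: sumr_ge0 => j _.
  by apply: mulr_ge0; [case: (hb01 i j) => -> | rewrite -expr2 sqr_ge0].
have hfo W s0 : 0 < s0 -> (forall s, 0 < s -> s <= s0 ->
    psd (Y0 + s *: W) /\ \tr (Y0 + s *: W) <= (n * n.+1).+1%:R) -> 0 <= frob G W.
  move=> hs0 h; apply: (fo_lemma hs0 (hQ W)) => s hs hss.
  have [hp ht] := h s hs hss; have := hmin _ hp ht; rewrite hexp; lra.
have hsplit : phi Y0 = \sum_i \sum_j b i j * ((Y0 i j - (i == j)%:R) *
    (Y0 i j - (i == j)%:R)) + 2 * frob L Y0.
  rewrite /phi /frob mulr_sumr -big_split /=; apply: eq_bigr => i _.
  by rewrite mulr_sumr -big_split.
have hfL0 := (frob_psd hLp hY0).1.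
have hphi0 : phi 0 <= n%:R.
  apply: (le_trans (y := \sum_i \sum_j (i == j)%:R * (1 : R))); last first.
    rewrite (eq_bigr (fun _ => 1)); last by move=> i _; apply: sum_delta_l.
    by rewrite sumr_const card_ord.
  apply: ler_sum => i _; apply: ler_sum => j _.
  rewrite !mxE !mulr0 addr0 sub0r mulrNN mulr1.
  by case: (hb01 i j) => ->; case: (i == j); rewrite /= ?mulr1 ?mul1r ?mul0r ?lexx ?ler01.
have hphiY0 : phi Y0 <= n%:R.
  apply: le_trans hphi0; apply: hmin; first exact: psd0.
  by rewrite mxtrace0 ler0n.
have hdiag i : Y0 i i <= n.+1%:R.
  have h1 := @term_le_sum2 n (fun i j => b i j * ((Y0 i j - (i == j)%:R) *
      (Y0 i j - (i == j)%:R))) i i.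
  have h1' : b i i * ((Y0 i i - (i == i)%:R) * (Y0 i i - (i == i)%:R)) <= phi Y0.
    apply: le_trans (h1 _) _.
      by move=> a c; apply: mulr_ge0; [case: (hb01 a c) => -> | rewrite -expr2 sqr_ge0].
    rewrite hsplit; lra.
  move: h1'; clear h1 => h1.
  rewrite hbd eqxx /= mulr1n mul1r in h1.
  have hn1 : (1 : R) <= n%:R by rewrite ler1n; exact: (leq_ltn_trans (leq0n _) (ltn_ord i)).
  rewrite -natr1; nra.
have htrY0 : \tr Y0 <= (n * n.+1)%:R.
  apply: (le_trans (y := \sum_(i < n) (n.+1%:R : R))).
    by apply: ler_sum => i _; apply: hdiag.
  by rewrite sumr_const card_ord -mulrnA mulnC.
have htrY0p : 0 <= \tr Y0 := tr_psd_ge0 hY0.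
have ec : ((n * n.+1).+1%:R : R) = (n * n.+1)%:R + 1 by rewrite natr1.
have hA : frob G Y0 <= 0.
  have := hfo (- Y0) 1 ltr01; rewrite frobNr oppr_ge0; apply => s hs hs1.
  have e : Y0 + s *: - Y0 = (1 - s) *: Y0 by rewrite scalerBl scale1r scalerN.
  rewrite e; split; first by apply: psd_scale => //; lra.
  rewrite mxtraceZ ec; nra.
have hG : psd G.
  have hD : D^T = D.
    by apply/matrixP => i j; rewrite !mxE hbs eq_sym hY0s.
  split; first by rewrite /G trB hLs hD.
  move=> x; rewrite -[_ 0 0]/(bf G x x) -frob_outer.
  set W := x *m x^T.
  have hW : psd W by have := psd_gram x^T; rewrite trmxK.
  set t := \tr W.
  have ht : 0 <= t := tr_psd_ge0 hW.
  have h1t : 0 < 1 + t by lra.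
  apply: (hfo W (1 + t)^-1); first by rewrite invr_gt0.
  move=> s hs hst; split.
    by apply: psd_add => //; apply: psd_scale => //; apply: ltW.
  have : s * (1 + t) <= (1 + t)^-1 * (1 + t) by rewrite ler_wpM2r //; lra.
  rewrite mulVf ?gt_eqF // mulrDr mulr1 => hst'.
  rewrite mxtraceD mxtraceZ -/t ec; nra.
have hDb : blockdiag P D.
  by move=> i j h; rewrite mxE /b blkR_out // mul0r.
have htrD : \tr D <= 0.
  have e : L = D + G by rewrite /G addrC subrK.
  have := hopt D G hDb hG e.
  by rewrite /G mxtraceB'; lra.
pose N := \sum_i \sum_j b i j * (((i == j)%:R - Y0 i j) * ((i == j)%:R - Y0 i j)).
have hN0 : 0 <= N.
  apply: sumr_ge0 => i _; apply: sumr_ge0 => j _.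
  by apply: mulr_ge0; [case: (hb01 i j) => -> | rewrite -expr2 sqr_ge0].
have etr : \tr D = N + frob L Y0 - frob G Y0.
  rewrite /N /frob -sum2_lin /mxtrace; apply: eq_bigr => i _.
  rewrite -(sum_delta_l (fun j => D i j) i); apply: eq_bigr => j _.
  rewrite /G !mxE; ring.
have hN : N = 0 by lra.
have hfL : frob L Y0 = 0 by lra.
exists Y0; split.
  split=> // I hI i j hi hj.
  have hbij : b i j = 1 by apply: blkR_in hI hi hj.
  have hnn a c : 0 <= b a c * (((a == c)%:R - Y0 a c) * ((a == c)%:R - Y0 a c)).
    by apply: mulr_ge0; [case: (hb01 a c) => -> | rewrite -expr2 sqr_ge0].
  rewrite /N in hN.
  have h1 := psumr_eq0P (fun a _ => sumr_ge0 _ (fun c _ => hnn a c)) hN.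
  have := psumr_eq0P (fun c _ => hnn i c) (h1 i isT) (i := j) isT.
  rewrite hbij mul1r => /eqP; rewrite mulf_eq0 orbb subr_eq0 => /eqP ->.
  by [].
move=> u hu.
have hLY : L *m Y0 = 0 := (frob_psd hLp hY0).2 hfL.
have hYL : Y0 *m L = 0 by rewrite -hY0.1 -hLs -trmx_mul hLY trmx0.
have hUL : (U <= L^T)%MS by case/andP: hLU.
by apply: (sub_null (submx_trans hu hUL)); rewrite trmxK.
Qed.
End S7.


Theorem proposition5p4 (R : realType) (n : nat) (P : {set {set 'I_n}})
  (U : 'M[R]_n) :
  finset.partition P [set: 'I_n] ->
  (recoverable P U <-> realizable P U) /\
  (realizable P U <-> ellipsoid_fitting P (orthmx U)).
Proof.
move=> hP; split; split.
- exact: rec_real.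
- exact: real_rec.
- exact: real_ell.
- exact: ell_real.
Qed.
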